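(* Let $\delta\in(0,1)$, $c>2\sqrt{rd}$ and $h>0$, and define $\pi_{\delta,c,h}(\xi)=\pi_{\delta,c}(\xi)+h\xi$. Then $$-d\,\pi_{\delta,c,h}''-c\,\pi_{\delta,c,h}'\le r\,\pi_{\delta,c,h}\big(1-\delta-\pi_{\delta,c,h}\big)\quad\text{on }\Big[-\sqrt{\tfrac{c}{rh}},\sqrt{\tfrac{c}{rh}}\Big].$$ Furthermore, there exists $h^\star>0$ such that for all $h\in(0,h^\star]$, $$\max_{[-\sqrt{c/(rh)},0]}\pi_{\delta,c,h}\ge1-2\delta\quad\text{and}\quad\max_{[-\sqrt{c/(rh)},0]}\pi_{\delta,c,h}>\max\Big(\pi_{\delta,c,h}(0),\ \pi_{\delta,c,h}\big(-\sqrt{\tfrac{c}{rh}}\big)\Big).$$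
   Context: Fixed parameters $d>0$, $r>0$. For $\delta\in[0,1)$ and $c\ge2\sqrt{rd}$, $\pi_{\delta,c}$ denotes the unique decreasing traveling wave profile with speed $c$ of the scalar equation $\partial_tv-d\partial_{xx}v=rv(1-\delta-v)$, i.e. the solution of $-d\pi''-c\pi'=r\pi(1-\delta-\pi)$ on $\mathbb{R}$ with $\pi(-\infty)=1-\delta$, $\pi(+\infty)=0$, normalized by $\pi_{\delta,c}(0)=\frac{1-\delta}{2}$. *)

(* Defs.v *)
From Stdlib Require Import Reals Lra.
Open Scope R_scope.

(* [pi] is a decreasing traveling-wave profile with speed [c] of
   d_t v - d v_xx = r v (1 - delta - v), normalized by pi(0) = (1-delta)/2:
   pi is twice differentiable (first derivative pi1, second pi2) and
   -d pi'' - c pi' = r pi (1 - delta - pi) on R,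
   pi(-oo) = 1 - delta, pi(+oo) = 0. *)
Definition is_tw (d r delta c : R) (pi : R -> R) : Prop :=
  exists pi1 pi2 : R -> R,
    (forall x, derivable_pt_lim pi x (pi1 x)) /\
    (forall x, derivable_pt_lim pi1 x (pi2 x)) /\
    (forall x, - d * pi2 x - c * pi1 x = r * pi x * (1 - delta - pi x)) /\
    (forall x y, x < y -> pi y <= pi x) /\
    (forall eps, 0 < eps -> exists M, forall x, x <= - M ->
        Rabs (pi x - (1 - delta)) < eps) /\
    (forall eps, 0 < eps -> exists M, forall x, M <= x -> Rabs (pi x) < eps) /\
    pi 0 = (1 - delta) / 2.

Definition pi_h (pi : R -> R) (h : R) (x : R) : R := pi x + h * x.

Definition Lh (r c h : R) : R := sqrt (c / (r * h)).

(* Main.v *)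
Require Import Defs.
From Stdlib Require Import Reals.
From Stdlib Require Import Lra Psatz FunctionalExtensionality.
Open Scope R_scope.

Lemma mono_le (pi : R -> R) : (forall x y, x < y -> pi y <= pi x) ->
  forall x y, x <= y -> pi y <= pi x.
Proof. intros H x y Hxy. destruct (Rle_lt_or_eq_dec _ _ Hxy). now apply H. subst; lra. Qed.

Lemma deriv_nonpos (f : R -> R) l x : (forall a b, a < b -> f b <= f a) ->
  derivable_pt_lim f x l -> l <= 0.
Proof.
  intros Hm Hd. destruct (Rle_or_lt l 0) as [|Hl]; [assumption|exfalso].
  destruct (Hd (l/2) ltac:(lra)) as [del Hdel].
  pose proof (cond_pos del) as Hdp.
  assert (Hhh : del/2 <> 0) by lra.
  specialize (Hdel (del/2) Hhh ltac:(rewrite Rabs_right; lra)).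
  apply Rabs_def2 in Hdel. destruct Hdel as [_ H2].
  pose proof (Hm x (x + del/2) ltac:(lra)).
  set (q := (f (x + del / 2) - f x) / (del / 2)) in *.
  assert (q * (del/2) = f (x + del / 2) - f x) by (unfold q; field; lra).
  nra.
Qed.

Lemma pi_le_top (pi : R -> R) delta : (forall x y, x < y -> pi y <= pi x) ->
  (forall eps, 0 < eps -> exists M, forall x, x <= - M -> Rabs (pi x - (1 - delta)) < eps) ->
  forall x, pi x <= 1 - delta.
Proof.
  intros Hm Hl x. destruct (Rle_or_lt (pi x) (1-delta)) as [|Hx]; [assumption|exfalso].
  destruct (Hl (pi x - (1-delta)) ltac:(lra)) as [M HM].
  set (y := Rmin (x-1) (-M)).
  assert (y <= x - 1 /\ y <= -M) as [Hy1 Hy2] by (unfold y; split; [apply Rmin_l|apply Rmin_r]).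
  specialize (HM y Hy2). apply Rabs_def2 in HM. pose proof (Hm y x ltac:(lra)). lra.
Qed.

Theorem lemma4p9 (d r delta c : R) (pi : R -> R) :
  0 < d -> 0 < r -> 0 < delta < 1 -> 2 * sqrt (r * d) < c ->
  is_tw d r delta c pi ->
  (forall h : R, 0 < h ->
     forall p1 p2 : R -> R,
       (forall y, derivable_pt_lim (pi_h pi h) y (p1 y)) ->
       (forall y, derivable_pt_lim p1 y (p2 y)) ->
       forall x, - Lh r c h <= x <= Lh r c h ->
         - d * p2 x - c * p1 x <= r * pi_h pi h x * (1 - delta - pi_h pi h x))
  /\
  (exists hstar : R, 0 < hstar /\
     forall h : R, 0 < h <= hstar ->
       exists xm : R, - Lh r c h <= xm <= 0 /\
         (forall y, - Lh r c h <= y <= 0 -> pi_h pi h y <= pi_h pi h xm) /\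
         1 - 2 * delta <= pi_h pi h xm /\
         Rmax (pi_h pi h 0) (pi_h pi h (- Lh r c h)) < pi_h pi h xm).
Proof.
  intros Hd Hr Hdel Hc [pi1 [pi2 [Hp1 [Hp2 [Hode [Hmon [Hlm [Hlp H0]]]]]]]].
  assert (Hcpos : 0 < c) by (pose proof (sqrt_pos (r*d)); lra).
  pose proof (mono_le pi Hmon) as Hmle.
  pose proof (pi_le_top pi delta Hmon Hlm) as Htop.
  assert (Hdh : forall h y, derivable_pt_lim (pi_h pi h) y (pi1 y + h * 1)).
  { intros h y. apply (derivable_pt_lim_plus pi (fun x => h * x)). apply Hp1.
    apply (derivable_pt_lim_scal id h y 1). apply derivable_pt_lim_id. }
  assert (HL2 : forall h, 0 < h -> Lh r c h * Lh r c h = c / (r * h) /\ 0 < Lh r c h).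
  { intros h Hh. assert (0 < c / (r*h)) by (apply Rdiv_lt_0_compat; nra).
    unfold Lh; split. apply sqrt_sqrt; lra. apply sqrt_lt_R0; lra. }
  split.
  - intros h Hh p1 p2 Hq1 Hq2 x Hx.
    assert (E1 : forall y, p1 y = pi1 y + h * 1).
    { intros y. apply (uniqueness_limite (pi_h pi h) y); auto. }
    assert (Ep : p1 = fun y => pi1 y + h * 1) by (apply functional_extensionality; auto).
    assert (E2 : p2 x = pi2 x + 0).
    { apply (uniqueness_limite p1 x); auto. rewrite Ep.
      apply (derivable_pt_lim_plus pi1 (fun _ => h*1)). apply Hp2. apply derivable_pt_lim_const. }
    rewrite E2, E1. unfold pi_h.
    destruct (HL2 h Hh) as [HLL HLp].
    assert (Hxx : r * h * (x * x) <= c).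
    { assert (x * x <= c / (r*h)) by nra.
      apply Rle_trans with (r * h * (c / (r*h))); [apply Rmult_le_compat_l; nra|right; field; lra]. }
    assert (HA : 0 <= x * (1 - delta - 2 * pi x)).
    { destruct (Rle_or_lt x 0).
      - pose proof (Hmle x 0 H).
        replace (x * (1 - delta - 2 * pi x)) with ((-x) * (2 * pi x - (1 - delta))) by ring.
        apply Rmult_le_pos; lra.
      - pose proof (Hmle 0 x ltac:(lra)). apply Rmult_le_pos; lra. }
    pose proof (Hode x).
    assert (0 <= (r*h) * (x * (1 - delta - 2 * pi x))) by (apply Rmult_le_pos; nra).
    assert (0 <= h * (c - r * h * (x * x))) by (apply Rmult_le_pos; lra).
    assert (r * (pi x + h * x) * (1 - delta - (pi x + h * x)) - (- d * (pi2 x + 0) - c * (pi1 x + h * 1))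
       = (r*h) * (x * (1 - delta - 2 * pi x)) + h * (c - r * h * (x * x)) + (r * pi x * (1 - delta - pi x) - (- d * pi2 x - c * pi1 x))) by ring.
    lra.
  - assert (Hpi1 : forall x, pi1 x <= 0) by (intros x; exact (deriv_nonpos pi (pi1 x) x Hmon (Hp1 x))).
    set (F := fun y => - d * pi1 y - c * pi y).
    assert (HF : forall y, derivable_pt_lim F y (- d * pi2 y - c * pi1 y)).
    { intros y. apply (derivable_pt_lim_minus (fun y => - d * pi1 y) (fun y => c * pi y)).
      apply (derivable_pt_lim_scal pi1 (-d)); apply Hp2.
      apply (derivable_pt_lim_scal pi c); apply Hp1. }
    assert (Hmv : forall a b, a < b -> exists xi, F b - F a = r * pi xi * (1 - delta - pi xi) * (b - a) /\ a < xi < b).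
    { intros a b Hab. destruct (MVT_cor2 F (fun y => - d * pi2 y - c * pi1 y) a b Hab) as [xi [E Hxi]].
      intros; apply HF. exists xi; split; auto. rewrite E, Hode; ring. }
    assert (HFm : forall a b, a <= b <= 0 -> F a <= F b).
    { intros a b [Hab Hb]. destruct (Rle_lt_or_eq_dec _ _ Hab) as [Hlt| ->]; [|lra].
      destruct (Hmv a b Hlt) as [xi [E Hxi]].
      pose proof (Hmle xi 0 ltac:(lra)). pose proof (Htop xi).
      assert (0 <= r * pi xi * (1 - delta - pi xi)).
      { apply Rmult_le_pos; [apply Rmult_le_pos|]; lra. }
      assert (0 <= r * pi xi * (1 - delta - pi xi) * (b - a)) by (apply Rmult_le_pos; lra). lra. }
    assert (Hlow : forall x, - c * (1 - delta) <= F x).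
    { intros x. unfold F. pose proof (Hpi1 x). pose proof (Htop x). nra. }
    assert (Hdrop : forall x, x < 0 ->
       r * ((1 - delta)/2) * (1 - delta - pi (2*x)) * (-x) <= F x - F (2*x)).
    { intros x Hx. destruct (Hmv (2*x) x ltac:(lra)) as [xi [E Hxi]]. rewrite E.
      pose proof (Hmle xi 0 ltac:(lra)). pose proof (Htop xi). pose proof (Hmle (2*x) xi ltac:(lra)).
      pose proof (Htop (2*x)).
      replace (x - 2 * x) with (-x) by ring.
      apply Rmult_le_compat_r; [lra|].
      rewrite !Rmult_assoc. apply Rmult_le_compat_l; [lra|].
      apply Rmult_le_compat; lra. }
    assert (Hglb : forall eps, 0 < eps -> exists x0, x0 <= 0 /\ forall x, x <= x0 -> F x - F (2*x) < eps).
    { intros eps Heps.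
      set (E := fun y => exists x, x <= 0 /\ y = - F x).
      assert (Hb : bound E).
      { exists (c * (1 - delta)). intros y [x [_ ->]]. pose proof (Hlow x). lra. }
      assert (Hne : exists y, E y) by (exists (- F 0); exists 0; split; [lra|reflexivity]).
      destruct (completeness E Hb Hne) as [m [Hub Hleast]].
      assert (exists x0, x0 <= 0 /\ m - eps < - F x0) as [x0 [Hx0 Hx0']].
      { destruct (Classical_Prop.classic (exists x0, x0 <= 0 /\ m - eps < - F x0)) as [|Hn]; [assumption|].
        exfalso. assert (is_upper_bound E (m - eps)).
        { intros y [x [Hx ->]]. destruct (Rle_or_lt (- F x) (m - eps)); [assumption|].
          exfalso; apply Hn; exists x; split; assumption. }
        specialize (Hleast _ H). lra. }
      exists x0; split; [assumption|]. intros x Hx.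
      assert (E (- F (2*x))) by (exists (2*x); split; [lra|reflexivity]).
      specialize (Hub _ H). pose proof (HFm x x0 ltac:(lra)). lra. }
    set (kap := r * ((1 - delta)/2)).
    assert (Hkap : 0 < kap) by (unfold kap; nra).
    destruct (Hglb (kap * (c / (8 * r)))) as [x0 [Hx0 Hx0F]].
    { apply Rmult_lt_0_compat; [lra|apply Rdiv_lt_0_compat; lra]. }
    set (eta := Rmin delta ((1 - delta)/2)).
    assert (Heta : 0 < eta /\ eta <= delta /\ eta <= (1-delta)/2).
    { unfold eta; split; [apply Rmin_glb_lt; lra|split; [apply Rmin_l|apply Rmin_r]]. }
    set (L0 := Rmax (Rmax (-4 * x0) (c / (r * eta))) 1).
    assert (HL0 : -4 * x0 <= L0 /\ c / (r * eta) <= L0 /\ 1 <= L0).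
    { unfold L0. pose proof (Rmax_l (Rmax (-4 * x0) (c / (r * eta))) 1).
      pose proof (Rmax_r (Rmax (-4 * x0) (c / (r * eta))) 1).
      pose proof (Rmax_l (-4 * x0) (c / (r * eta))). pose proof (Rmax_r (-4 * x0) (c / (r * eta))).
      lra. }
    exists (c / (r * (L0 * L0))). split.
    { apply Rdiv_lt_0_compat; [lra|]. apply Rmult_lt_0_compat; nra. }
    intros h [Hh Hhs].
    destruct (HL2 h Hh) as [HLL HLp]. set (L := Lh r c h) in *.
    assert (HrhL : r * h * (L * L) = c) by (rewrite HLL; field; lra).
    assert (HL0L : L0 <= L).
    { assert (h * (r * (L0 * L0)) <= c).
      { apply Rle_trans with (c / (r * (L0 * L0)) * (r * (L0 * L0))).
        apply Rmult_le_compat_r; nra. right; field; nra. }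
      assert (L0 * L0 <= L * L).
      { apply Rmult_le_reg_l with (r * h); [nra|]. nra. }
      destruct (Rle_or_lt L0 L) as [|Hlt]; [assumption|].
      assert (L * L < L0 * L0) by (apply Rmult_le_0_lt_compat; lra). lra. }
    assert (HcL : c <= r * L * eta).
    { assert (c / (r * eta) * (r * eta) = c) by (field; lra).
      assert (c / (r * eta) * (r * eta) <= L * (r * eta)) by (apply Rmult_le_compat_r; nra).
      lra. }
    set (u := 1 - delta - pi (-L/2)).
    assert (Hu : 0 <= u) by (unfold u; pose proof (Htop (-L/2)); lra).
    assert (HuL : 2 * r * L * u < c).
    { assert (Hx : - L / 4 <= x0) by lra.
      specialize (Hx0F _ Hx). pose proof (Hdrop (-L/4) ltac:(lra)).
      replace (2 * (-L/4)) with (-L/2) in * by field. fold u in H.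
      unfold kap in *.
      assert (r * ((1 - delta) / 2) * (u * (L/4)) < r * ((1 - delta) / 2) * (c / (8 * r))) by lra.
      apply Rmult_lt_reg_l in H1; [|lra].
      assert (c / (8 * r) * (8 * r) = c) by (field; lra). nra. }
    assert (HP : pi_h pi h (-L/2) = 1 - delta - u - h * L / 2) by (unfold pi_h, u; field).
    assert (Hk1 : r * L * (u + h * L / 2) < r * L * eta) by nra.
    apply Rmult_lt_reg_l in Hk1; [|nra].
    assert (Hk2 : r * L * u < r * L * (h * L / 2)) by nra.
    apply Rmult_lt_reg_l in Hk2; [|nra].
    destruct (continuity_ab_maj (pi_h pi h) (-L) 0 ltac:(lra)) as [xm [Hmax Hxm]].
    { intros y _. apply derivable_continuous_pt. exists (pi1 y + h * 1). apply Hdh. }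
    pose proof (Hmax (-L/2) ltac:(lra)) as HPm.
    exists xm. split; [exact Hxm|]. split; [exact Hmax|]. split.
    + lra.
    + apply Rmax_lub_lt.
      * unfold pi_h at 1. rewrite H0. lra.
      * unfold pi_h at 1. pose proof (Htop (-L)). nra.
Qed.
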